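(* Let $\mathfrak{N}$ be a pseudo-Euclidean 2-step nilpotent Lie algebra with center $\mathfrak{Z}$, let $(e_1,\ldots,e_p)$ be a basis of $\mathfrak{Z}$ and let $(J_1,\ldots,J_p)$ be the associated structure endomorphisms. Define endomorphisms $F,G:\mathfrak{N}\to\mathfrak{N}$ by $$F=\frac12\sum_{i,j=1}^p\langle e_i,e_j\rangle\, J_i\circ J_j,\qquad G(u)=-\frac14\sum_{i,j=1}^p\langle e_i,u\rangle\,\mathrm{tr}(J_i\circ J_j)\,e_j .$$ Then $F$ and $G$ are symmetric with respect to $\langle\cdot,\cdot\rangle$, they do not depend on the choice of the basis $(e_1,\ldots,e_p)$ of $\mathfrak{Z}$, and $F\circ G=G\circ F=0$.
   Context: A pseudo-Euclidean Lie algebra is a finite-dimensional real Lie algebra endowed with a nondegenerate symmetric bilinear form $\langle\cdot,\cdot\rangle$ (no invariance assumed). A Lie algebra $\mathfrak{N}$ is 2-step nilpotent if $[\mathfrak{N},\mathfrak{N}]\neq 0$ and $[\mathfrak{N},\mathfrak{N}]\subset\mathfrak{Z}$, the center. Given a basis $(e_1,\ldots,e_p)$ of $\mathfrak{Z}$, the structure endomorphisms $J_1,\ldots,J_p$ are the unique endomorphisms of $\mathfrak{N}$, skew-symmetric with respect to $\langle\cdot,\cdot\rangle$, such that $[u,v]=\sum_{i=1}^p\langle J_iu,v\rangle e_i$ for all $u,v\in\mathfrak{N}$; one has $\bigcap_i\ker J_i=\mathfrak{Z}$. *)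

(* Defs.v *)
(* Endomorphisms act on the right: u |-> u *m A,
   so the composition A o B (apply B first) has matrix B *m A. *)
From HB Require Import structures.
From mathcomp Require Import all_boot all_order all_algebra.
From mathcomp Require Import reals.
Set Implicit Arguments. Unset Strict Implicit. Unset Printing Implicit Defensive.
Import Order.TTheory GRing.Theory Num.Theory.
Local Open Scope ring_scope.

Section Defs.
Variables (R : realType) (n : nat).

Definition form (S : 'M[R]_n) (u v : 'rV[R]_n) : R := (u *m S *m v^T) 0 0.

Definition pseudo_euclidean (S : 'M[R]_n) : Prop := S^T = S /\ S \in unitmx.

Definition is_lie_bracket (br : 'rV[R]_n -> 'rV[R]_n -> 'rV[R]_n) : Prop :=
  [/\ forall (a : R) u v w, br (a *: u + v) w = a *: br u w + br v w,
      forall (a : R) u v w, br u (a *: v + w) = a *: br u v + br u w,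
      forall u, br u u = 0 &
      forall u v w, br u (br v w) + br v (br w u) + br w (br u v) = 0].

Definition center (br : 'rV[R]_n -> 'rV[R]_n -> 'rV[R]_n) (z : 'rV[R]_n) : Prop :=
  forall u, br z u = 0.

Definition two_step_nilpotent (br : 'rV[R]_n -> 'rV[R]_n -> 'rV[R]_n) : Prop :=
  (exists u v, br u v != 0) /\ (forall u v, center br (br u v)).

Definition is_basis_of (P : 'rV[R]_n -> Prop) (p : nat) (e : 'I_p -> 'rV[R]_n) : Prop :=
  [/\ forall i, P (e i),
      (forall c : 'I_p -> R, \sum_i c i *: e i = 0 -> forall i, c i = 0) &
      forall z, P z -> exists c : 'I_p -> R, z = \sum_i c i *: e i].

Definition skew (S : 'M[R]_n) (A : 'M[R]_n) : Prop :=
  forall u v, form S (u *m A) v = - form S u (v *m A).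

Definition symmetric_op (S : 'M[R]_n) (f : 'rV[R]_n -> 'rV[R]_n) : Prop :=
  forall u v, form S (f u) v = form S u (f v).

Definition structure_endos (S : 'M[R]_n) (br : 'rV[R]_n -> 'rV[R]_n -> 'rV[R]_n)
    (p : nat) (e : 'I_p -> 'rV[R]_n) (J : 'I_p -> 'M[R]_n) : Prop :=
  (forall i, skew S (J i)) /\
  (forall u v, br u v = \sum_i form S (u *m J i) v *: e i).

Definition Fop (S : 'M[R]_n) (p : nat) (e : 'I_p -> 'rV[R]_n) (J : 'I_p -> 'M[R]_n)
    (u : 'rV[R]_n) : 'rV[R]_n :=
  2^-1 *: \sum_i \sum_j form S (e i) (e j) *: (u *m J j *m J i).

Definition Gop (S : 'M[R]_n) (p : nat) (e : 'I_p -> 'rV[R]_n) (J : 'I_p -> 'M[R]_n)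
    (u : 'rV[R]_n) : 'rV[R]_n :=
  - (4^-1) *: \sum_i \sum_j (form S (e i) u * \tr (J j *m J i)) *: e j.

End Defs.

(* Main.v *)
Require Import Defs.
From HB Require Import structures.
From mathcomp Require Import all_boot all_order all_algebra.
From mathcomp Require Import reals.
Import GRing.Theory Num.Theory.
Local Open Scope ring_scope.
Local Notation form := Defs.form.
Local Notation skew := Defs.skew.
Local Notation symmetric_op := Defs.symmetric_op.

Section Aux.
Variables (R : realType) (n : nat) (S : 'M[R]_n).

Lemma form_suml (I : Type) (r : seq I) (P : pred I) (f : I -> 'rV[R]_n) v :
  form S (\sum_(i <- r | P i) f i) v = \sum_(i <- r | P i) form S (f i) v.
Proof. by rewrite /form !mulmx_suml summxE. Qed.

Lemma form_sumr (I : Type) (r : seq I) (P : pred I) (f : I -> 'rV[R]_n) u :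
  form S u (\sum_(i <- r | P i) f i) = \sum_(i <- r | P i) form S u (f i).
Proof. by rewrite /form raddf_sum mulmx_sumr summxE. Qed.

Lemma formZl a u v : form S (a *: u) v = a * form S u v.
Proof. by rewrite /form -!scalemxAl mxE. Qed.

Lemma formZr a u v : form S u (a *: v) = a * form S u v.
Proof. by rewrite /form linearZ /= -scalemxAr mxE. Qed.

Lemma formBl u w v : form S (u - w) v = form S u v - form S w v.
Proof. by rewrite /form !mulmxBl !mxE. Qed.

Lemma form0l v : form S 0 v = 0.
Proof. by rewrite /form !mul0mx mxE. Qed.

Lemma form_sym u v : S^T = S -> form S u v = form S v u.
Proof.
move=> HS; rewrite /form.
have tr00 (A : 'M[R]_1) : A 0 0 = (A^T) 0 0 by rewrite mxE.
rewrite tr00.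
by rewrite !trmx_mul trmxK HS mulmxA.
Qed.

Lemma form_nondeg w : S \in unitmx -> (forall v, form S w v = 0) -> w = 0.
Proof.
move=> HS H.
have wS0 : w *m S = 0.
  apply/rowP => j; have := H (delta_mx 0 j).
  by rewrite /form trmx_delta -colE mxE => ->; rewrite mxE.
by rewrite -[w]mulmx1 -(mulmxV HS) mulmxA wS0 mul0mx.
Qed.

Lemma mx_ext0 (M : 'M[R]_n) : (forall u : 'rV[R]_n, u *m M = 0) -> M = 0.
Proof. by move=> H; apply/row_matrixP => i; rewrite row0 rowE H. Qed.


Lemma sum4 (V : nmodType) p p' (T : 'I_p' -> 'I_p' -> 'I_p -> 'I_p -> V) :
  \sum_i \sum_j \sum_k \sum_l T k l i j = \sum_k \sum_l \sum_i \sum_j T k l i j.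
Proof.
rewrite (eq_bigr (fun i => \sum_k \sum_j \sum_l T k l i j)); last first.
  by move=> i _; rewrite exchange_big.
rewrite exchange_big; apply: eq_bigr => k _.
rewrite (eq_bigr (fun i => \sum_l \sum_j T k l i j)); last first.
  by move=> i _; rewrite exchange_big.
by rewrite exchange_big.
Qed.

Section Main.
Hypotheses (HSs : S^T = S) (HSu : S \in unitmx).
Variable (br : 'rV[R]_n -> 'rV[R]_n -> 'rV[R]_n).

Lemma center_J p (e : 'I_p -> 'rV[R]_n) J :
  is_basis_of (center br) e -> structure_endos S br e J ->
  forall z, center br z -> forall i, z *m J i = 0.
Proof.
move=> [_ Hind _] [_ Hbr] z Hz i; apply: (form_nondeg _ HSu) => v.
have := Hz v; rewrite Hbr => /(Hind (fun i => form S (z *m J i) v)); apply.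
Qed.

Lemma Fsym p (e : 'I_p -> 'rV[R]_n) J :
  (forall i, skew S (J i)) -> symmetric_op S (Fop S e J).
Proof.
move=> Hsk u v; rewrite /Fop formZl formZr form_suml form_sumr; congr (_ * _).
under eq_bigr => i _ do rewrite form_suml.
under [RHS]eq_bigr => i _ do rewrite form_sumr.
rewrite [RHS]exchange_big; apply: eq_bigr => i _; apply: eq_bigr => j _.
rewrite formZl formZr Hsk Hsk opprK (form_sym (e i) (e j) HSs).
by [].
Qed.

Lemma Gsym p (e : 'I_p -> 'rV[R]_n) J : symmetric_op S (Gop S e J).
Proof.
move=> u v; rewrite /Gop formZl formZr form_suml form_sumr; congr (_ * _).
under eq_bigr => i _ do rewrite form_suml.
under [RHS]eq_bigr => i _ do rewrite form_sumr.
rewrite [RHS]exchange_big; apply: eq_bigr => i _; apply: eq_bigr => j _.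
rewrite formZl formZr mxtrace_mulC (form_sym u (e i) HSs).
by rewrite mulrAC [RHS]mulrAC [form S (e j) v * _]mulrC.
Qed.


Lemma FG0 p (e : 'I_p -> 'rV[R]_n) J :
  (forall i j, e j *m J i = 0) -> forall u, Fop S e J (Gop S e J u) = 0.
Proof.
move=> Hc u.
have GJ k : Gop S e J u *m J k = 0.
  rewrite /Gop -scalemxAl mulmx_suml big1 ?scaler0 // => i _.
  by rewrite mulmx_suml big1 // => j _; rewrite -scalemxAl Hc scaler0.
rewrite /Fop big1 ?scaler0 // => i _.
by rewrite big1 // => j _; rewrite GJ mul0mx scaler0.
Qed.

Lemma GF0 p (e : 'I_p -> 'rV[R]_n) J :
  (forall i, skew S (J i)) ->
  (forall i j, e j *m J i = 0) -> forall u, Gop S e J (Fop S e J u) = 0.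
Proof.
move=> Hsk Hc u.
have FE k : Fop S e J (e k) = 0.
  rewrite /Fop big1 ?scaler0 // => i _.
  by rewrite big1 // => j _; rewrite Hc mul0mx scaler0.
rewrite /Gop big1 ?scaler0 // => i _.
by rewrite big1 // => j _; rewrite -(@Fsym _ e J Hsk) FE form0l !mul0r scale0r.
Qed.

Lemma indep p (e : 'I_p -> 'rV[R]_n) J p' (e' : 'I_p' -> 'rV[R]_n) J' :
  is_basis_of (center br) e -> structure_endos S br e J ->
  is_basis_of (center br) e' -> structure_endos S br e' J' ->
  Fop S e' J' =1 Fop S e J /\ Gop S e' J' =1 Gop S e J.
Proof.
move=> [He Hind Hspan] [Hsk Hbr] [He' _ _] [Hsk' Hbr'].
have [P HP] := @fin_all_exists _ (fun _ => 'I_p -> R)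
  (fun k c => e' k = \sum_i c i *: e i) (fun k => Hspan _ (He' k)).
have HJ i : J i = \sum_k P k i *: J' k.
  apply/eqP; rewrite -subr_eq0; apply/eqP; apply: mx_ext0 => u.
  apply: (form_nondeg _ HSu) => v.
  rewrite mulmxBr formBl mulmx_sumr form_suml.
  under eq_bigr => k _ do rewrite -scalemxAr formZl.
  apply: (Hind (fun i => form S (u *m J i) v - \sum_k P k i * form S (u *m J' k) v)).
  under eq_bigr => j _ do rewrite scalerBl.
  rewrite sumrB -Hbr Hbr'; apply/eqP; rewrite subr_eq0; apply/eqP.
  rewrite (eq_bigr (fun k => \sum_i (form S (u *m J' k) v * P k i) *: e i)); last first.
    by move=> k _; rewrite HP scaler_sumr; apply: eq_bigr => x _; rewrite scalerA.
  rewrite exchange_big; apply: eq_bigr => x _; rewrite scaler_suml.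
  by apply: eq_bigr => k _; rewrite mulrC.
split => u.
- rewrite /Fop; congr (_ *: _).
  transitivity (\sum_k \sum_l \sum_i \sum_j
     (P k i * P l j * form S (e i) (e j)) *: (u *m J' l *m J' k)).
    apply: eq_bigr => k _; apply: eq_bigr => l _.
    rewrite (HP k) (HP l) form_suml scaler_suml; apply: eq_bigr => i _.
    rewrite formZl form_sumr mulr_sumr scaler_suml; apply: eq_bigr => j _.
    by rewrite formZr mulrA.
  rewrite -sum4; apply: eq_bigr => i _; apply: eq_bigr => j _.
  rewrite (HJ j) mulmx_sumr (HJ i) mulmx_suml scaler_sumr.
  under [RHS]eq_bigr => l _ do rewrite mulmx_sumr scaler_sumr.
  rewrite [RHS]exchange_big; apply: eq_bigr => k _; apply: eq_bigr => l _.
  rewrite -!scalemxAr -scalemxAl !scalerA; congr (_ *: _).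
  by rewrite mulrC.
- rewrite /Gop; congr (_ *: _).
  transitivity (\sum_k \sum_l \sum_i \sum_j
     (P k i * P l j * form S (e i) u * \tr (J' l *m J' k)) *: e j).
    apply: eq_bigr => k _; apply: eq_bigr => l _.
    rewrite (HP k) (HP l) form_suml mulr_suml scaler_suml; apply: eq_bigr => i _.
    rewrite scaler_sumr; apply: eq_bigr => j _.
    rewrite formZl scalerA; congr (_ *: _).
    by rewrite mulrAC; congr (_ * _); rewrite mulrAC.
  rewrite -sum4; apply: eq_bigr => i _; apply: eq_bigr => j _.
  rewrite (HJ j) mulmx_suml raddf_sum mulr_sumr scaler_suml (HJ i).
  under [RHS]eq_bigr => l _ do rewrite mulmx_sumr raddf_sum mulr_sumr scaler_suml.
  rewrite [RHS]exchange_big; apply: eq_bigr => k _; apply: eq_bigr => l _.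
  rewrite /= -scalemxAr -scalemxAl !mxtraceZ; congr (_ *: _).
  rewrite -!mulrA; symmetry; rewrite mulrCA; congr (_ * _).
  by rewrite mulrCA.
Qed.

End Main.
End Aux.

Theorem mainTheorem2 (R : realType) (n : nat) (S : 'M[R]_n)
    (br : 'rV[R]_n -> 'rV[R]_n -> 'rV[R]_n)
    (p : nat) (e : 'I_p -> 'rV[R]_n) (J : 'I_p -> 'M[R]_n) :
  pseudo_euclidean S ->
  is_lie_bracket br ->
  two_step_nilpotent br ->
  is_basis_of (center br) e ->
  structure_endos S br e J ->
  [/\ symmetric_op S (Fop S e J),
      symmetric_op S (Gop S e J),
      (forall (p' : nat) (e' : 'I_p' -> 'rV[R]_n) (J' : 'I_p' -> 'M[R]_n),
          is_basis_of (center br) e' -> structure_endos S br e' J' ->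
          Fop S e' J' =1 Fop S e J /\ Gop S e' J' =1 Gop S e J),
      (forall u, Fop S e J (Gop S e J u) = 0) &
      (forall u, Gop S e J (Fop S e J u) = 0)].
Proof.
move=> [HSs HSu] _ _ Hb Hs.
have Hc : forall i j, e j *m J i = 0.
  have He : forall j, center br (e j) by case: Hb.
  by move=> i j; exact: (@center_J _ _ _ HSu _ _ _ _ Hb Hs _ (He j) i).
have Hsk := Hs.1.
split.
- exact: Fsym.
- exact: Gsym.
- by move=> p' e' J' Hb' Hs'; exact: (@indep _ _ _ HSu _ _ _ _ _ _ _ Hb Hs Hb' Hs').
- exact: FG0.
- exact: GF0.
Qed.
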